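(* Suppose Assumption A2 (stated in the context) holds and let $\mathcal A_n^\dagger=\{\alpha>0:|\alpha/\alpha_0-1|\le n^{-2/\kappa}\}$. There exists an integer $N_2$ depending only on $\nu,d,\alpha_0,L,r_0,\kappa$ such that for all $n>N_2$ (and any distinct $S_n$), $$\sup_{\alpha\in\mathcal A_n^\dagger}\sum_{k=1}^n|\lambda_{k,n}(\alpha)-1|\le Ln^{-1},\qquad \sup_{\alpha\in\mathcal A_n^\dagger}\sum_{k=1}^n|\lambda_{k,n}(\alpha)-1|^2\le L^2n^{-3},$$ $$\sup_{\alpha\in\mathcal A_n^\dagger}\sum_{k=1}^n|\lambda_{k,n}(\alpha)^{-1}-1|\le 2Ln^{-1},\qquad \sup_{\alpha\in\mathcal A_n^\dagger}\sum_{k=1}^n|\lambda_{k,n}(\alpha)^{-1}-1|^2\le 4L^2n^{-3}.$$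
   Context: Fix $\theta_0,\alpha_0>0$. $K_{\alpha,\nu}:\mathbb R^d\to\mathbb R$ ($\alpha>0$) are positive definite functions, $S_n=\{\mathbf s_1,\dots,\mathbf s_n\}\subset[0,1]^d$ distinct points, $K_{\alpha,\nu}(S_n)=(K_{\alpha,\nu}(\mathbf s_i-\mathbf s_j))_{ij}$, and $\lambda_{1,n}(\alpha),\dots,\lambda_{n,n}(\alpha)$ are the eigenvalues of $K_{\alpha_0,\nu}(S_n)^{-1}K_{\alpha,\nu}(S_n)$. Spectral density: $f_{\theta,\alpha,\nu}(w)=(2\pi)^{-d}\int e^{-\imath w^Tx}\theta K_{\alpha,\nu}(x)dx$. Assumption A2: (i) there exist $L>0$, $r_0\in(0,1/2)$, $\kappa>0$ with $\sup_w|f_{\theta_0,\alpha,\nu}(w)/f_{\theta_0,\alpha_0,\nu}(w)-1|\le L|\alpha/\alpha_0-1|^\kappa$ whenever $|\alpha/\alpha_0-1|\le r_0$; (ii) $f_{\theta,\alpha,\nu}(w)$ is non-increasing in $\alpha$ for each $\theta,w$. *)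

(* Defs.v *)
From HB Require Import structures.
From mathcomp Require Import all_boot all_order all_algebra.
From mathcomp Require Import all_classical all_reals all_analysis.
Set Implicit Arguments. Unset Strict Implicit. Unset Printing Implicit Defensive.
Import Order.TTheory GRing.Theory Num.Theory.
Import numFieldNormedType.Exports.
Local Open Scope classical_set_scope.
Local Open Scope ring_scope.

(* Lebesgue measure on R^(n+1), built as the iterated product measure        *)
(*   R^(n+2) = R^(n+1) x R  (the second factor is sigma-finite).             *)
Fixpoint Rd (R : realType) (n : nat) : {dp : measure_display & measurableType dp} :=
  match n with
  | 0 => existT (fun dp => measurableType dp) _ (measurableTypeR R)
  | n'.+1 => existT (fun dp => measurableType dp) _
               (projT2 (Rd R n') * measurableTypeR R : measurableType _)%type
  end.

Fixpoint lebd (R : realType) (n : nat) : {measure set (projT2 (Rd R n)) -> \bar R} :=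
  match n return {measure set (projT2 (Rd R n)) -> \bar R} with
  | 0 => Measure.clone _ _ _ (@lebesgue_measure R) _
  | n'.+1 => Measure.clone _ _ _ (lebd R n' \x @lebesgue_measure R)%E _
  end.

Fixpoint coord (R : realType) (n : nat) : projT2 (Rd R n) -> nat -> R :=
  match n return projT2 (Rd R n) -> nat -> R with
  | 0 => fun x _ => x
  | n'.+1 => fun p i => if (i < n'.+1)%N then coord p.1 i else p.2
  end.

(* For d >= 1, the measure space (R^d, Lebesgue) is  Rdim R d  with  lebR R d,
   and  vec  identifies its points with row vectors 'rV[R]_d. *)
Definition Rdim (R : realType) (d : nat) := projT2 (Rd R d.-1).
Definition lebR (R : realType) (d : nat) : {measure set (Rdim R d) -> \bar R} :=
  lebd R d.-1.
Definition vec (R : realType) (d : nat) (x : Rdim R d) : 'rV[R]_d :=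
  \row_(i < d) coord x i.

Definition intRd (R : realType) (d : nat) (F : 'rV[R]_d -> R) : R :=
  Rintegral (lebR R d) setT (fun x => F (vec x)).
Definition integrableRd (R : realType) (d : nat) (F : 'rV[R]_d -> R) : Prop :=
  (lebR R d).-integrable setT (fun x => (F (vec x))%:E).

Definition dotv (R : realType) (d : nat) (w x : 'rV[R]_d) : R :=
  \sum_(i < d) w ord0 i * x ord0 i.

(* Spectral density  f_theta(w) = (2 pi)^(-d) \int e^{-i w^T x} theta K(x) dx.
   For a real, even (in particular positive definite) K the imaginary part
   -\int sin(w^T x) theta K(x) dx vanishes, so f_theta is the real integral below. *)
Definition spec_dens (R : realType) (d : nat) (theta : R) (K : 'rV[R]_d -> R)
    (w : 'rV[R]_d) : R :=
  ((2 * pi) ^- d) * intRd (fun x => cos (dotv w x) * (theta * K x)).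

Definition pos_def_fun (R : realType) (d : nat) (K : 'rV[R]_d -> R) : Prop :=
  (forall x, K (- x) = K x) /\
  forall (m : nat) (pts : 'I_m -> 'rV[R]_d), injective pts ->
    forall c : 'I_m -> R, (exists i, c i != 0) ->
      0 < \sum_(i < m) \sum_(j < m) c i * c j * K (pts i - pts j).

Definition cov_mx (R : realType) (d n : nat) (K : 'rV[R]_d -> R)
    (S : 'I_n -> 'rV[R]_d) : 'M[R]_n :=
  \matrix_(i < n, j < n) K (S i - S j).

(* Main.v *)
Require Import Defs.
From HB Require Import structures.
From mathcomp Require Import all_boot all_order all_algebra.
From mathcomp Require Import all_classical all_reals all_analysis.
Import Order.TTheory GRing.Theory Num.Theory.
Import numFieldNormedType.Exports.
Local Open Scope classical_set_scope.
Local Open Scope ring_scope.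
From mathcomp Require Import ring lra.

Lemma coord_meas (R : realType) (m i : nat) :
  measurable_fun setT (fun x : projT2 (Rd R m) => Defs.coord x i).
Proof.
elim: m i => [|m IH] i /=; first exact: measurable_id.
case: (i < m.+1)%N.
  exact: (measurableT_comp (IH i) measurable_fst).
exact: measurable_snd.
Qed.

Lemma dot_meas1 (R : realType) (d : nat) (w : 'rV[R]_d) :
  measurable_fun setT (fun x : Rdim R d => cos (dotv w (vec x))).
Proof.
apply: measurableT_comp; first exact: measurable_realfun.continuous_measurable_fun (@continuous_cos R).
rewrite /dotv /vec.
apply: measurable_sum => i /=.
apply: (eq_measurable_fun (fun x : Rdim R d => w ord0 i * Defs.coord x i)).
  by move=> x _; rewrite mxE.
apply: measurable_realfun.measurable_funM => //; exact: coord_meas.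
Qed.

Lemma dot_meas2 (R : realType) (d : nat) (v : 'rV[R]_d) :
  measurable_fun setT (fun x : Rdim R d => cos (dotv (vec x) v)).
Proof.
apply: measurableT_comp; first exact: measurable_realfun.continuous_measurable_fun (@continuous_cos R).
rewrite /dotv /vec.
apply: measurable_sum => i /=.
apply: (eq_measurable_fun (fun x : Rdim R d => Defs.coord x i * v ord0 i)).
  by move=> x _; rewrite mxE.
apply: measurable_realfun.measurable_funM => //; exact: coord_meas.
Qed.

Lemma cos_bounded (T : Type) (A : set T) (R : realType) (h : T -> R) :
  [bounded cos (h x) | x in A].
Proof.
exists 1; split; first by rewrite num_real.
move=> M M1 x _; apply: le_trans (ltW M1).
by rewrite ler_norml cos_le1 cos_geN1.
Qed.

Lemma int_cos1 (R : realType) (d : nat) (F : 'rV[R]_d -> R) w :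
  integrableRd F -> integrableRd (fun x => cos (dotv w x) * F x).
Proof.
move=> iF.
have := integrableMr measurableT (dot_meas1 _ _ w) (cos_bounded _ _ _ _) iF.
apply: eq_integrable => // x _ /=; by rewrite EFinM.
Qed.

Lemma int_cos2 (R : realType) (d : nat) (F : 'rV[R]_d -> R) v :
  integrableRd F -> integrableRd (fun w => cos (dotv w v) * F w).
Proof.
move=> iF.
have := integrableMr measurableT (dot_meas2 _ _ v) (cos_bounded _ _ _ _) iF.
apply: eq_integrable => // x _ /=; by rewrite EFinM.
Qed.

Lemma intRdZ (R : realType) (d : nat) (F : 'rV[R]_d -> R) a :
  integrableRd F -> integrableRd (fun w => a * F w) /\
  intRd (fun w => a * F w) = a * intRd F.
Proof.
move=> iF; split.
  have := integrableZl measurableT a iF.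
  by apply: eq_integrable => // x _ /=; rewrite EFinM.
by rewrite /intRd RintegralZl.
Qed.

Lemma intRd_sum (R : realType) (d : nat) (I : Type) (s : seq I)
    (G : I -> 'rV[R]_d -> R) :
  (forall i, integrableRd (G i)) ->
  integrableRd (fun w => \sum_(i <- s) G i w) /\
  intRd (fun w => \sum_(i <- s) G i w) = \sum_(i <- s) intRd (G i).
Proof.
move=> iG; elim: s => [|a s [IH1 IH2]].
  split.
    have := @integrable0 _ _ R (lebR R d) setT.
    by apply: eq_integrable => // x _ /=; rewrite big_nil.
  rewrite big_nil /intRd.
  rewrite (@eq_Rintegral _ _ _ _ _ (fun _ => 0)); last by move=> x _; rewrite big_nil.
  by rewrite /Rintegral integral0.
split.
  have := integrableD measurableT (iG a) IH1.
  by apply: eq_integrable => // x _ /=; rewrite big_cons.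
rewrite big_cons -IH2 /intRd -RintegralD //.
  by apply: eq_Rintegral => x _; rewrite big_cons.
exact: iG.
Qed.

Lemma spec_scale (R : realType) (d : nat) (K : 'rV[R]_d -> R) th w :
  integrableRd K -> spec_dens th K w = th * spec_dens 1 K w.
Proof.
move=> iK; rewrite /spec_dens mulrCA; congr (_ * _).
have -> : (fun x => cos (dotv w x) * (1 * K x)) = (fun x => cos (dotv w x) * K x).
  by apply/funext => x; rewrite mul1r.
have [_ <-] := @intRdZ _ _ _ th (int_cos1 _ _ _ w iK).
by rewrite /intRd; apply: eq_Rintegral => x _; rewrite mulrCA.
Qed.

Set Implicit Arguments. Unset Strict Implicit.
Definition qf (R : realFieldType) (n : nat) (M : 'M[R]_n) (u : 'rV[R]_n) : R :=
  \sum_(i < n) \sum_(j < n) u ord0 i * u ord0 j * M i j.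

Lemma qfE (R : realFieldType) (n : nat) (M : 'M[R]_n) (u : 'rV[R]_n) :
  qf M u = \sum_(j < n) (u *m M) ord0 j * u ord0 j.
Proof.
rewrite /qf exchange_big /=; apply: eq_bigr => j _.
rewrite mxE mulr_suml; apply: eq_bigr => i _; ring.
Qed.

Lemma eig_bound (R : realFieldType) (n : nat) (A B : 'M[R]_n) (eps : R) :
  (forall u : 'rV_n, u != 0 -> 0 < qf A u) ->
  (forall u : 'rV_n, (1 - eps) * qf A u <= qf B u <= (1 + eps) * qf A u) ->
  forall l, root (char_poly (invmx A *m B)) l -> `|l - 1| <= eps.
Proof.
move=> Apos AB l.
have Au : A \in unitmx.
  rewrite unitmxE unitfE; apply/negP => /det0P [v v0 vA].
  by have := Apos v v0; rewrite qfE; under eq_bigr do rewrite vA mxE mul0r; rewrite big1 // ltxx.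
rewrite -eigenvalue_root_char => /eigenvalueP [v vM v0].
set u := v *m invmx A.
have uA : u *m A = v by rewrite /u -mulmxA mulVmx // mulmx1.
have u0 : u != 0 by apply: contraNneq v0 => u0; rewrite -uA u0 mul0mx.
have qB : qf B u = l * qf A u.
  rewrite !qfE mulr_sumr; apply: eq_bigr => j _.
  by rewrite uA /u -mulmxA vM mxE mulrA.
have := AB u; have := Apos u u0; rewrite qB => qp /andP [h1 h2].
have h1' : 1 - eps <= l by rewrite -(ler_pM2r qp).
have h2' : l <= 1 + eps by rewrite -(ler_pM2r qp).
rewrite ler_norml; apply/andP; split; lra.
Qed.

Definition gfun (R : realType) (d n : nat) (S : 'I_n -> 'rV[R]_d) (c : 'rV[R]_n)
  (w : 'rV[R]_d) : R :=
  \sum_(i < n) \sum_(j < n) c ord0 i * c ord0 j * cos (dotv w (S i - S j)).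

Lemma dotvB (R : realType) (d : nat) (w x y : 'rV[R]_d) :
  dotv w (x - y) = dotv w x - dotv w y.
Proof.
rewrite /dotv -sumrB; apply: eq_bigr => i _; rewrite !mxE; ring.
Qed.

Lemma gfun_ge0 (R : realType) (d n : nat) (S : 'I_n -> 'rV[R]_d) c w :
  0 <= gfun S c w.
Proof.
have -> : gfun S c w = (\sum_(i < n) c ord0 i * cos (dotv w (S i))) ^+ 2 +
                       (\sum_(i < n) c ord0 i * sin (dotv w (S i))) ^+ 2.
  rewrite /gfun !expr2 !mulr_suml -big_split /=; apply: eq_bigr => i _.
  rewrite !mulr_sumr -big_split /=; apply: eq_bigr => j _.
  rewrite dotvB cosB; ring.
by rewrite addr_ge0 // sqr_ge0.
Qed.

Lemma qf_repr (R : realType) (d n : nat) (K F : 'rV[R]_d -> R)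
    (S : 'I_n -> 'rV[R]_d) (c : 'rV[R]_n) :
  integrableRd F -> (forall x, K x = intRd (fun w => cos (dotv w x) * F w)) ->
  integrableRd (fun w => gfun S c w * F w) /\
  qf (cov_mx K S) c = intRd (fun w => gfun S c w * F w).
Proof.
move=> iF KF.
have iij : forall i j, integrableRd (fun w => c ord0 i * c ord0 j *
                          (cos (dotv w (S i - S j)) * F w)).
  by move=> i j; exact: (@intRdZ _ _ _ _ (int_cos2 _ _ _ _ iF)).1.
have ii : forall i, integrableRd (fun w => \sum_(j < n) c ord0 i * c ord0 j *
                          (cos (dotv w (S i - S j)) * F w)).
  by move=> i; exact: (@intRd_sum _ _ _ _ _ (iij i)).1.
have -> : (fun w => gfun S c w * F w) = (fun w => \sum_(i < n) \sum_(j < n)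
     c ord0 i * c ord0 j * (cos (dotv w (S i - S j)) * F w)).
  apply/funext => w; rewrite /gfun mulr_suml; apply: eq_bigr => i _.
  rewrite mulr_suml; apply: eq_bigr => j _; ring.
split; first exact: (@intRd_sum _ _ _ _ _ ii).1.
rewrite (@intRd_sum _ _ _ _ _ ii).2 /qf; apply: eq_bigr => i _.
rewrite (@intRd_sum _ _ _ _ _ (iij i)).2; apply: eq_bigr => j _.
by rewrite (@intRdZ _ _ _ _ (int_cos2 _ _ _ _ iF)).2 mxE KF.
Qed.


Lemma num_facts (R : realType) (L r0 kappa : R) :
  0 < L -> 0 < r0 -> 0 < kappa ->
  exists N2 : nat, forall n : nat, (N2 < n)%N ->
    n%:R `^ (- (2 / kappa)) <= r0 /\
    (n%:R `^ (- (2 / kappa))) `^ kappa = (n%:R ^+ 2)^-1 /\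
    L * (n%:R ^+ 2)^-1 <= 2^-1.
Proof.
move=> L0 r00 k0.
set A := (r0^-1) `^ (kappa / 2).
exists (Num.trunc (A + 2 * L)) => n Hn.
have A0 : 0 <= A by apply: powR_ge0.
have nA : A + 2 * L < n%:R.
  apply: lt_le_trans (truncnS_gt _) _; rewrite ler_nat; exact: Hn.
have n1 : 1 <= n%:R :> R by rewrite ler1n; case: n Hn nA.
have n0 : 0 < n%:R :> R by lra.
split.
  rewrite powRN -[leRHS]invrK lef_pV2 ?posrE ?invr_gt0 ?powR_gt0 //.
  have -> : r0^-1 = A `^ (2 / kappa).
    rewrite /A -powRrM (_ : kappa / 2 * (2 / kappa) = 1) ?powRr1 ?invr_ge0 ?ltW //; field; rewrite ?gt_eqF //.
  apply: ge0_ler_powR; rewrite ?nnegrE //; first by rewrite divr_ge0 // ltW.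
  lra.
split.
  rewrite -powRrM mulNr mulfVK ?gt_eqF // powRN -(powR_mulrn _ (ltW n0)).
  by [].
have : n%:R <= n%:R ^+ 2 :> R by rewrite expr2 ler_peMr // ltW.
move=> h; rewrite ler_pdivrMr ?exprn_gt0 //; lra.
Qed.

Lemma pt_bound (R : realType) (g f0 fa e : R) : 0 <= g -> 0 <= f0 -> f0 != 0 ->
  `|fa / f0 - 1| <= e -> (1 - e) * (g * f0) <= g * fa <= (1 + e) * (g * f0).
Proof.
move=> g0 f00 f0n; rewrite ler_norml => /andP[h1 h2].
have gf : 0 <= g * f0 by rewrite mulr_ge0.
rewrite -(divfK f0n fa) [g * (_ * _)]mulrCA; apply/andP; split; rewrite ler_wpM2r //; lra.
Qed.

Theorem lemmaS4 (R : realType) (d : nat) (K : R -> R -> 'rV[R]_d -> R)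
    (nu alpha0 L r0 kappa : R) :
  (0 < d)%N -> 0 < alpha0 ->
  (* standing assumptions on the covariance family K_{alpha,nu}, alpha > 0 *)
  (forall alpha, 0 < alpha -> pos_def_fun (K alpha nu)) ->
  (forall alpha, 0 < alpha -> integrableRd (K alpha nu)) ->
  (forall alpha, 0 < alpha -> integrableRd (spec_dens 1 (K alpha nu))) ->
  (forall alpha, 0 < alpha -> forall w, 0 <= spec_dens 1 (K alpha nu) w) ->
  (forall alpha, 0 < alpha -> forall x,
     K alpha nu x = intRd (fun w => cos (dotv w x) * spec_dens 1 (K alpha nu) w)) ->
  (* constants of Assumption A2 *)
  0 < L -> 0 < r0 < 2^-1 -> 0 < kappa ->
  exists N2 : nat,
  forall theta0 : R, 0 < theta0 ->
  (* Assumption A2 (i) *)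
  (forall alpha, 0 < alpha -> `|alpha / alpha0 - 1| <= r0 ->
     forall w, `| spec_dens theta0 (K alpha nu) w / spec_dens theta0 (K alpha0 nu) w - 1|
               <= L * (`|alpha / alpha0 - 1| `^ kappa)) ->
  (* Assumption A2 (ii) *)
  (forall theta, 0 < theta -> forall w alpha1 alpha2, 0 < alpha1 -> alpha1 <= alpha2 ->
     spec_dens theta (K alpha2 nu) w <= spec_dens theta (K alpha1 nu) w) ->
  forall n : nat, (N2 < n)%N ->
  forall S : 'I_n -> 'rV[R]_d, injective S ->
  (forall k i, 0 <= S k ord0 i <= 1) ->
  forall alpha, 0 < alpha -> `|alpha / alpha0 - 1| <= n%:R `^ (- (2 / kappa)) ->
  forall lambda : 'I_n -> R,
    char_poly (invmx (cov_mx (K alpha0 nu) S) *m cov_mx (K alpha nu) S)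
      = \prod_(k < n) ('X - (lambda k)%:P) ->
    \sum_(k < n) `|lambda k - 1| <= L * n%:R^-1 /\
    \sum_(k < n) `|lambda k - 1| ^+ 2 <= L ^+ 2 * (n%:R ^+ 3)^-1 /\
    \sum_(k < n) `|(lambda k)^-1 - 1| <= 2 * L * n%:R^-1 /\
    \sum_(k < n) `|(lambda k)^-1 - 1| ^+ 2 <= 4 * L ^+ 2 * (n%:R ^+ 3)^-1.

Proof.
move=> d0 a00 hpd hKi hFi hF0 hinv L0 /andP[r00 r0h] k0.
have [N2 hN] := num_facts L0 r00 k0.
exists N2 => th th0 A2i A2ii n Hn S injS _ alpha a0 ha lambda hchar.
have [hr [hpow hhalf]] := hN n Hn.
have n0 : n%:R != 0 :> R by rewrite pnatr_eq0 -lt0n; by move: Hn; case: n {hN hr hpow hhalf S injS lambda hchar ha}.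
set e := L * (n%:R ^+ 2)^-1.
have he : e + e <= 1.
  have h22 : 2^-1 + 2^-1 = 1 :> R by field.
  rewrite /e; lra.
have e0 : 0 <= e by rewrite /e; apply: mulr_ge0; [exact: ltW | rewrite invr_ge0 exprn_ge0 // ler0n].
set F0 := spec_dens 1 (K alpha0 nu).
set Fa := spec_dens 1 (K alpha nu).
have F0nz : forall w, F0 w != 0.
  move=> w; have := A2i alpha0 a00 _ w.
  rewrite [alpha0 / alpha0]divff ?(gt_eqF a00) // subrr normr0 powR0 ?(gt_eqF k0) // mulr0 => /(_ (ltW r00)).
  rewrite (spec_scale _ _ _ _ _ (hKi _ a00)) -/F0.
  apply: contraTneq => ->; rewrite mulr0 invr0 mulr0 sub0r normrN normr1.
  by rewrite ler10.
have ratio : forall w, `|Fa w / F0 w - 1| <= e.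
  move=> w; have := A2i alpha a0 (le_trans ha hr) w.
  rewrite (spec_scale _ _ _ _ _ (hKi _ a00)) (spec_scale _ _ _ _ _ (hKi _ a0)) -/F0 -/Fa.
  rewrite invfM mulrACA mulfV ?(gt_eqF th0) // mul1r => h.
  apply: le_trans h _; rewrite /e -hpow ler_wpM2l ?(ltW L0) //.
  apply: ge0_ler_powR => //; rewrite ?nnegrE ?(ltW k0) ?powR_ge0 //.
have qb : forall u : 'rV_n,
    (1 - e) * qf (cov_mx (K alpha0 nu) S) u <= qf (cov_mx (K alpha nu) S) u
      <= (1 + e) * qf (cov_mx (K alpha0 nu) S) u.
  move=> u.
  have [i0 q0] := qf_repr S u (hFi _ a00) (hinv _ a00).
  have [ia qa] := qf_repr S u (hFi _ a0) (hinv _ a0).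
  rewrite -/F0 -/Fa in i0 q0 ia qa.
  rewrite q0 qa; apply/andP; split.
    rewrite -(@intRdZ _ _ _ _ i0).2; apply: le_Rintegral => //.
      exact: (@intRdZ _ _ _ _ i0).1.
    move=> x _.
    have := pt_bound (gfun_ge0 S u (vec x)) (hF0 _ a00 (vec x)) (F0nz (vec x)) (ratio (vec x)).
    by case/andP.
  rewrite -(@intRdZ _ _ _ _ i0).2; apply: le_Rintegral => //.
    exact: (@intRdZ _ _ _ _ i0).1.
  move=> x _.
  have := pt_bound (gfun_ge0 S u (vec x)) (hF0 _ a00 (vec x)) (F0nz (vec x)) (ratio (vec x)).
  by case/andP.
have pos : forall u : 'rV_n, u != 0 -> 0 < qf (cov_mx (K alpha0 nu) S) u.
  move=> u u0; have [_ h] := hpd _ a00.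
  have -> : qf (cov_mx (K alpha0 nu) S) u = \sum_(i < n) \sum_(j < n)
      u ord0 i * u ord0 j * K alpha0 nu (S i - S j).
    by apply: eq_bigr => i _; apply: eq_bigr => j _; rewrite mxE.
  apply: (h n S injS (fun i => u ord0 i)).
  case: (pselect (exists i, u ord0 i != 0)) => // nex; exfalso.
  move/negP: u0; apply; apply/eqP/rowP => i; rewrite mxE.
  apply/eqP/negPn/negP => hi; apply: nex; by exists i.
have lb : forall k, `|lambda k - 1| <= e.
  move=> k; apply: (eig_bound pos qb).
  rewrite hchar /root horner_prod (bigD1 k) //= hornerXsubC subrr mul0r.
  by [].
have lb2 : forall k, `|(lambda k)^-1 - 1| <= 2 * e.
  move=> k; have lk := lb k; move: (lk); rewrite ler_norml => /andP[h1 h2].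
  have lp : 0 < lambda k by lra.
  have ly : lambda k * (lambda k)^-1 = 1 by rewrite mulfV ?(gt_eqF lp).
  have y0 : 0 < (lambda k)^-1 by rewrite invr_gt0.
  move: ly y0; set y := (lambda k)^-1 => ly y0.
  have yE : y - 1 = y * (1 - lambda k).
    by rewrite mulrBr mulr1 mulrC ly.
  have y2 : y <= 2.
    have : y * (2 * lambda k - 1) >= 0 by rewrite mulr_ge0 ?(ltW y0) //; lra.
    rewrite mulrBr mulr1 mulrCA [y * _]mulrC ly mulr1; lra.
  rewrite yE normrM (gtr0_norm y0) distrC.
  by apply: ler_pM => //; rewrite ltW.
have sq : forall x c : R, 0 <= c -> `|x| <= c -> `|x| ^+ 2 <= c ^+ 2.
  by move=> x c c0 h; rewrite !expr2 ler_pM.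
split.
  apply: le_trans (ler_sum _ (fun k _ => lb k)) _.
  rewrite sumr_const card_ord -mulr_natr /e le_eqVlt; apply/orP; left.
  apply/eqP; field; exact: n0.
split.
  apply: le_trans (ler_sum _ (fun k _ => sq _ _ e0 (lb k))) _.
  rewrite sumr_const card_ord -mulr_natr /e le_eqVlt; apply/orP; left.
  apply/eqP; field; exact: n0.
have e20 : 0 <= 2 * e by rewrite mulr_ge0.
split.
  apply: le_trans (ler_sum _ (fun k _ => lb2 k)) _.
  rewrite sumr_const card_ord -mulr_natr /e le_eqVlt; apply/orP; left.
  apply/eqP; field; exact: n0.
apply: le_trans (ler_sum _ (fun k _ => sq _ _ e20 (lb2 k))) _.
rewrite sumr_const card_ord -mulr_natr /e le_eqVlt; apply/orP; left.
apply/eqP; field; exact: n0.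
Qed.
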